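(* Let $\gamma>0$, $\tilde T>0$, and let $\zeta_1,\dots,\zeta_M\in\mathbb{R}$. For $i\in E$ define $$\alpha_i=\frac{\zeta_i^2}{2}+\sum_{j\in E\setminus\{i\}}\Big(\tilde q_{ij}\log\frac{\tilde q_{ij}}{q_{ij}}-\tilde q_{ij}+q_{ij}\Big),$$ let $\boldsymbol\alpha=(\alpha_1,\dots,\alpha_M)'$ and define $\boldsymbol\varphi(t)=(\varphi_1(t),\dots,\varphi_M(t))'$ by $$\boldsymbol\varphi(t)=-\int_t^{\tilde T}\exp\big(\tilde{\mathbf Q}(\tilde T-s)\big)\boldsymbol\alpha\,ds,\qquad t\in[0,\tilde T].$$ Then $\boldsymbol\varphi$ is the unique solution of the linear ODE system $$\varphi_i'(t)-\sum_{j\in E\setminus\{i\}}\tilde q_{ij}\big(\varphi_i(t)-\varphi_j(t)\big)-\alpha_i=0,\quad \varphi_i(\tilde T)=0,\quad i\in E,$$ and the functions $u_i(t,w)=-\exp(-\gamma w+\varphi_i(t))$, $i\in E$, form a classical solution on $[0,\tilde T]\times\mathbb{R}$ of the HJB system $$\partial_t u_i+\sup_{(\tilde\pi^{(0)},(\tilde\pi^{(j)})_{j\ne i})}\Big\{\Big(\zeta_i\tilde\pi^{(0)}-\sum_{j\in E\setminus\{i\}}\tilde q_{ij}\tilde\pi^{(j)}\Big)\partial_w u_i+\frac{(\tilde\pi^{(0)})^2}{2}\partial_{ww}u_i+\sum_{j\in E\setminus\{i\}}q_{ij}\big(u_j(t,w+\tilde\pi^{(j)})-u_i(t,w)\big)\Big\}=0,$$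 $i\in E$, $t\in[0,\tilde T)$, with terminal condition $u_i(\tilde T,w)=-e^{-\gamma w}$. Moreover $\partial_{ww}u_i=\gamma^2u_i<0$, and for each $(t,w,i)$ the supremum is attained (uniquely) at $$\tilde\pi^{(0)*}_i=\frac{\zeta_i}{\gamma},\qquad \tilde\pi^{(j)*}_i(t)=-\frac1\gamma\Big(\log\frac{\tilde q_{ij}}{q_{ij}}+\varphi_i(t)-\varphi_j(t)\Big),\quad j\in E\setminus\{i\},$$ which does not depend on $w$.
   Context: $E=\{1,\dots,M\}$. $\tilde{\mathbf Q}=(\tilde q_{ij})$ and $\mathbf Q=(q_{ij})$ are the generator matrices of a continuous-time irreducible Markov chain $\xi$ on $E$ under the risk-neutral measure $\mathbb Q$ and the physical measure $\mathbb P$ respectively (off-diagonal entries nonnegative, rows summing to zero), with $q_{ij}=0$ iff $\tilde q_{ij}=0$. All sums $\sum_{j\in E\setminus\{i\}}$ involving $\log(\tilde q_{ij}/q_{ij})$ are understood to run only over $j$ with $q_{ij}>0$ (terms with $q_{ij}=\tilde q_{ij}=0$ are omitted, and for such $j$ the corresponding variable $\tilde\pi^{(j)}$ does not appear). $\zeta_i$ is the market price of (Brownian) risk in regime $i$, i.e. $dZ^{\mathbb Q}_t=dZ^{\mathbb P}_t+\zeta(\xi_t)dt$. In the financial interpretation, $u_i(t,w)$ is the value function $\sup \mathbb E[-e^{-\gamma W_{\tilde T}}\mid W_t=w,\xi_t=i]$ of an investor trading futures, with transformed controls $\tilde\pi$ and wealth dynamics $dW_t=(\zeta(\xi_t)\tilde\pi^{(0)}_t+\sum_{j\neq\xi_t}(q(\xi_t,j)-\tilde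 q(\xi_t,j))\tilde\pi^{(j)}_t)dt+\tilde\pi^{(0)}_tdZ^{\mathbb P}_t+$ (jump of size $\tilde\pi^{(j)}_t$ when $\xi$ jumps from $\xi_{t-}$ to $j$, compensated under $\mathbb P$). *)

(* Defs.v *)
From Stdlib Require Import Reals Lra Lia Arith Relations ClassicalEpsilon.
Open Scope R_scope.

(* The state space E = {1,...,M} is encoded as {0,...,M-1} (indices i < M).
   Matrices are functions nat -> nat -> R, only entries with indices < M matter. *)

Fixpoint fsum (n : nat) (f : nat -> R) : R :=
  match n with
  | O => 0
  | S n' => fsum n' f + f n'
  end.

Definition sumoff (M i : nat) (f : nat -> R) : R :=
  fsum M (fun j => if Nat.eq_dec j i then 0 else f j).

Definition matmul (M : nat) (A B : nat -> nat -> R) : nat -> nat -> R :=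
  fun i j => fsum M (fun k => A i k * B k j).

Definition matid : nat -> nat -> R :=
  fun i j => if Nat.eq_dec i j then 1 else 0.

Fixpoint matpow (M : nat) (A : nat -> nat -> R) (k : nat) : nat -> nat -> R :=
  match k with
  | O => matid
  | S k' => matmul M (matpow M A k') A
  end.

Definition expmx (M : nat) (A : nat -> nat -> R) (t : R) (i j : nat) : R :=
  epsilon (inhabits 0)
    (fun l => infinite_sum (fun k => t ^ k / INR (fact k) * matpow M A k i j) l).

(* Riemann integral of f from a to b (value independent of the integrability proof) *)
Definition RInt (f : R -> R) (a b : R) : R :=
  epsilon (inhabits 0) (fun v => exists pr : Riemann_integrable f a b, RiemannInt pr = v).

Definition is_generator (M : nat) (Q : nat -> nat -> R) : Prop :=
  (forall i j, (i < M)%nat -> (j < M)%nat -> i <> j -> 0 <= Q i j) /\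
  (forall i, (i < M)%nat -> fsum M (fun j => Q i j) = 0).

Definition edge (M : nat) (Q : nat -> nat -> R) (a b : nat) : Prop :=
  (a < M)%nat /\ (b < M)%nat /\ a <> b /\ 0 < Q a b.

Definition irreducible (M : nat) (Q : nat -> nat -> R) : Prop :=
  forall i j, (i < M)%nat -> (j < M)%nat -> clos_refl_trans nat (edge M Q) i j.

(* alpha_i; the log-term sum only runs over j with q_ij > 0 *)
Definition alpha (M : nat) (Q Qt : nat -> nat -> R) (zeta : nat -> R) (i : nat) : R :=
  zeta i ^ 2 / 2 +
  sumoff M i (fun j => if Rlt_dec 0 (Q i j)
                       then Qt i j * ln (Qt i j / Q i j) - Qt i j + Q i j
                       else 0).

Definition phi (M : nat) (Q Qt : nat -> nat -> R) (zeta : nat -> R) (T : R)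
  (i : nat) (t : R) : R :=
  - RInt (fun s => fsum M (fun j => expmx M Qt (T - s) i j * alpha M Q Qt zeta j)) t T.

Definition u (M : nat) (Q Qt : nat -> nat -> R) (zeta : nat -> R) (T gamma : R)
  (i : nat) (t w : R) : R :=
  - exp (- gamma * w + phi M Q Qt zeta T i t).

(* the expression inside the supremum of the HJB equation, with uw, uww the
   values of the w-derivatives of u_i at (t,w) *)
Definition hjb_H (M : nat) (Q Qt : nat -> nat -> R) (zeta : nat -> R) (T gamma : R)
  (i : nat) (t w uw uww : R) (pi0 : R) (p : nat -> R) : R :=
  (zeta i * pi0 - sumoff M i (fun j => Qt i j * p j)) * uw
  + pi0 ^ 2 / 2 * uww
  + sumoff M i (fun j => Q i j * (u M Q Qt zeta T gamma j t (w + p j)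
                                   - u M Q Qt zeta T gamma i t w)).

Definition pi0_star (zeta : nat -> R) (gamma : R) (i : nat) : R := zeta i / gamma.

Definition pij_star (M : nat) (Q Qt : nat -> nat -> R) (zeta : nat -> R) (T gamma : R)
  (i : nat) (t : R) (j : nat) : R :=
  - / gamma * (ln (Qt i j / Q i j) + phi M Q Qt zeta T i t - phi M Q Qt zeta T j t).

Definition cont_on_strip (T : R) (f : R -> R -> R) : Prop :=
  forall t w, 0 <= t <= T -> forall eps, 0 < eps -> exists delta, 0 < delta /\
    forall t' w', 0 <= t' <= T -> Rabs (t' - t) < delta -> Rabs (w' - w) < delta ->
      Rabs (f t' w' - f t w) < eps.

(* Main.v *)
Require Import Defs.
From Stdlib Require Import Reals Relations ClassicalEpsilon Lra Lia FunctionalExtensionality.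
From Coquelicot Require Import Coquelicot.
Open Scope R_scope.

Lemma fsum_ext n f g : (forall k, (k < n)%nat -> f k = g k) -> fsum n f = fsum n g.
Proof. induction n; simpl; intros H; auto. rewrite IHn by (intros; apply H; lia). rewrite H by lia. auto. Qed.

Lemma fsum_plus n f g : fsum n (fun k => f k + g k) = fsum n f + fsum n g.
Proof. induction n; simpl; [ring|rewrite IHn; ring]. Qed.

Lemma fsum_minus n f g : fsum n (fun k => f k - g k) = fsum n f - fsum n g.
Proof. induction n; simpl; [ring|rewrite IHn; ring]. Qed.

Lemma fsum_scal n c f : fsum n (fun k => c * f k) = c * fsum n f.
Proof. induction n; simpl; [ring|rewrite IHn; ring]. Qed.

Lemma fsum_scalr n c f : fsum n (fun k => f k * c) = fsum n f * c.
Proof. induction n; simpl; [ring|rewrite IHn; ring]. Qed.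

Lemma fsum_const n c : fsum n (fun _ => c) = INR n * c.
Proof. induction n; simpl fsum; [simpl; ring|rewrite IHn, S_INR; ring]. Qed.

Lemma fsum_zero n f : (forall k, (k < n)%nat -> f k = 0) -> fsum n f = 0.
Proof. intros H. rewrite (fsum_ext n f (fun _ => 0)) by auto. rewrite fsum_const; ring. Qed.

Lemma fsum_swap n m (f : nat -> nat -> R) :
  fsum n (fun a => fsum m (fun b => f a b)) = fsum m (fun b => fsum n (fun a => f a b)).
Proof.
  induction n; simpl.
  - symmetry; apply fsum_zero; auto.
  - rewrite IHn, <- fsum_plus. auto.
Qed.

Lemma fsum_le n f g : (forall k, (k < n)%nat -> f k <= g k) -> fsum n f <= fsum n g.
Proof. induction n; simpl; intros H; [lra|]. pose proof (H n ltac:(lia)). pose proof (IHn ltac:(intros; apply H; lia)). lra. Qed.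

Lemma fsum_nonneg n f : (forall k, (k < n)%nat -> 0 <= f k) -> 0 <= fsum n f.
Proof. intros H. rewrite <- (fsum_zero n (fun _ => 0)) by auto. apply fsum_le; auto. Qed.

Lemma fsum_abs n f : Rabs (fsum n f) <= fsum n (fun k => Rabs (f k)).
Proof. induction n; simpl. rewrite Rabs_R0; lra. eapply Rle_trans; [apply Rabs_triang|]. lra. Qed.

Lemma fsum_term_le n f k : (forall k, (k < n)%nat -> 0 <= f k) -> (k < n)%nat -> f k <= fsum n f.
Proof.
  induction n; simpl; intros H Hk; [lia|].
  destruct (Nat.eq_dec k n).
  - subst. pose proof (fsum_nonneg n f ltac:(intros; apply H; lia)). lra.
  - pose proof (IHn ltac:(intros; apply H; lia) ltac:(lia)). pose proof (H n ltac:(lia)). lra.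
Qed.

Lemma fsum_nonneg_zero n f k : (forall k, (k < n)%nat -> 0 <= f k) -> fsum n f = 0 -> (k < n)%nat -> f k = 0.
Proof.
  intros H Hs Hk. pose proof (fsum_term_le n f k H Hk). pose proof (H k Hk). lra.
Qed.

Lemma fsum_delta n i f : (i < n)%nat -> fsum n (fun l => (if Nat.eq_dec i l then 1 else 0) * f l) = f i.
Proof.
  induction n; simpl; intros Hi; [lia|].
  destruct (Nat.eq_dec i n).
  - subst. rewrite fsum_zero. ring. intros k Hk. destruct (Nat.eq_dec n k); [lia|ring].
  - rewrite IHn by lia. ring.
Qed.

Lemma fsum_delta' n j f : (j < n)%nat -> fsum n (fun l => f l * (if Nat.eq_dec l j then 1 else 0)) = f j.
Proof.
  intros Hj. rewrite <- (fsum_delta n j f Hj). apply fsum_ext. intros k _.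
  destruct (Nat.eq_dec k j), (Nat.eq_dec j k); subst; try lia; ring.
Qed.

Lemma fsum_split n i f : (i < n)%nat -> fsum n f = f i + sumoff n i f.
Proof.
  unfold sumoff. induction n; simpl; intros Hi; [lia|].
  destruct (Nat.eq_dec i n).
  - subst. destruct (Nat.eq_dec n n); [|lia].
    rewrite (fsum_ext n (fun j => if Nat.eq_dec j n then 0 else f j) f). ring.
    intros k Hk. destruct (Nat.eq_dec k n); [lia|auto].
  - rewrite IHn by lia. destruct (Nat.eq_dec n i); [lia|]. ring.
Qed.

Lemma sumoff_ext n i f g : (forall k, (k < n)%nat -> k <> i -> f k = g k) -> sumoff n i f = sumoff n i g.
Proof. intros H. unfold sumoff. apply fsum_ext. intros k Hk. destruct (Nat.eq_dec k i); auto. Qed.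

Lemma sumoff_plus n i f g : sumoff n i (fun k => f k + g k) = sumoff n i f + sumoff n i g.
Proof. unfold sumoff. rewrite <- fsum_plus. apply fsum_ext. intros. destruct (Nat.eq_dec k i); ring. Qed.

Lemma sumoff_minus n i f g : sumoff n i (fun k => f k - g k) = sumoff n i f - sumoff n i g.
Proof. unfold sumoff. rewrite <- fsum_minus. apply fsum_ext. intros. destruct (Nat.eq_dec k i); ring. Qed.

Lemma sumoff_scal n i c f : sumoff n i (fun k => c * f k) = c * sumoff n i f.
Proof. unfold sumoff. rewrite <- fsum_scal. apply fsum_ext. intros. destruct (Nat.eq_dec k i); ring. Qed.

Lemma sumoff_le n i f g : (forall k, (k < n)%nat -> k <> i -> f k <= g k) -> sumoff n i f <= sumoff n i g.
Proof. intros H. unfold sumoff. apply fsum_le. intros k Hk. destruct (Nat.eq_dec k i); [lra|auto]. Qed.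

Lemma sumoff_abs n i f : Rabs (sumoff n i f) <= fsum n (fun k => Rabs (f k)).
Proof. unfold sumoff. eapply Rle_trans; [apply fsum_abs|]. apply fsum_le. intros k _.
  destruct (Nat.eq_dec k i); [rewrite Rabs_R0; apply Rabs_pos|lra]. Qed.

Lemma sumoff_nonneg_zero n i f k : (forall k, (k < n)%nat -> k <> i -> 0 <= f k) -> sumoff n i f = 0 ->
  (k < n)%nat -> k <> i -> f k = 0.
Proof.
  intros H Hs Hk Hki. unfold sumoff in Hs.
  assert (H0 : forall j, (j < n)%nat -> 0 <= (if Nat.eq_dec j i then 0 else f j)).
  { intros j Hj. destruct (Nat.eq_dec j i). lra. apply H; auto. }
  pose proof (fsum_nonneg_zero n _ k H0 Hs Hk) as H1.
  simpl in H1. destruct (Nat.eq_dec k i); [lia|auto].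
Qed.

Lemma fsum_derive n (f : nat -> R -> R) df x :
  (forall k, (k < n)%nat -> derivable_pt_lim (f k) x (df k)) ->
  derivable_pt_lim (fun y => fsum n (fun k => f k y)) x (fsum n df).
Proof.
  induction n; simpl; intros H.
  - apply derivable_pt_lim_const.
  - apply (derivable_pt_lim_plus (fun y => fsum n (fun k => f k y)) (f n)).
    apply IHn; intros; apply H; lia. apply H; lia.
Qed.

Lemma fsum_cont n (f : nat -> R -> R) x :
  (forall k, (k < n)%nat -> continuity_pt (f k) x) ->
  continuity_pt (fun y => fsum n (fun k => f k y)) x.
Proof.
  induction n; simpl; intros H.
  - apply continuity_pt_const. intros a b; auto.
  - apply (continuity_pt_plus (fun y => fsum n (fun k => f k y)) (f n)).
    apply IHn; intros; apply H; lia. apply H; lia.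
Qed.

Lemma matmul_assoc M X Y Z i j :
  matmul M (matmul M X Y) Z i j = matmul M X (matmul M Y Z) i j.
Proof.
  unfold matmul.
  transitivity (fsum M (fun k => fsum M (fun l => X i l * Y l k * Z k j))).
  { apply fsum_ext; intros. rewrite <- fsum_scalr. auto. }
  rewrite fsum_swap. apply fsum_ext; intros. rewrite <- fsum_scal. apply fsum_ext; intros. ring.
Qed.

Lemma matpow_comm M A k i j : (i < M)%nat -> (j < M)%nat ->
  matmul M (matpow M A k) A i j = matmul M A (matpow M A k) i j.
Proof.
  revert i j. induction k; intros i j Hi Hj.
  - simpl. unfold matmul, matid. rewrite fsum_delta by auto. rewrite fsum_delta' by auto. auto.
  - change (matpow M A (S k)) with (matmul M (matpow M A k) A).
    transitivity (matmul M (matmul M A (matpow M A k)) A i j).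
    { unfold matmul at 1 3. apply fsum_ext. intros l Hl. rewrite IHk; auto. }
    rewrite matmul_assoc. auto.
Qed.

Lemma matpow_S_left M A k i j : (i < M)%nat -> (j < M)%nat ->
  matpow M A (S k) i j = fsum M (fun l => A i l * matpow M A k l j).
Proof. intros. simpl. rewrite matpow_comm; auto. Qed.

Definition mnorm M (A : nat -> nat -> R) := fsum M (fun i => fsum M (fun j => Rabs (A i j))).

Lemma mnorm_nonneg M A : 0 <= mnorm M A.
Proof. apply fsum_nonneg; intros. apply fsum_nonneg; intros. apply Rabs_pos. Qed.

Lemma mnorm_ge M A i j : (i < M)%nat -> (j < M)%nat -> Rabs (A i j) <= mnorm M A.
Proof.
  intros. unfold mnorm. eapply Rle_trans.
  2:{ apply (fsum_term_le M (fun i => fsum M (fun j => Rabs (A i j))) i); auto.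
      intros; apply fsum_nonneg; intros; apply Rabs_pos. }
  apply (fsum_term_le M (fun j => Rabs (A i j)) j); auto. intros; apply Rabs_pos.
Qed.

Lemma matpow_bound M A k i j : (i < M)%nat -> (j < M)%nat ->
  Rabs (matpow M A k i j) <= (INR M * mnorm M A) ^ k.
Proof.
  revert i j. induction k; intros i j Hi Hj.
  - simpl. unfold matid. destruct (Nat.eq_dec i j); rewrite ?Rabs_R1, ?Rabs_R0; lra.
  - simpl matpow. unfold matmul. eapply Rle_trans; [apply fsum_abs|].
    eapply Rle_trans.
    { apply (fsum_le M _ (fun _ => (INR M * mnorm M A) ^ k * mnorm M A)).
      intros l Hl. rewrite Rabs_mult. apply Rmult_le_compat; try apply Rabs_pos.
      apply IHk; auto. apply mnorm_ge; auto. }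
    rewrite fsum_const. simpl. lra.
Qed.

Definition ecoef M A i j (k : nat) : R := matpow M A k i j / INR (Factorial.fact k).

Lemma pow_fact_le_exp x k : 0 <= x -> x ^ k / INR (Factorial.fact k) <= exp x.
Proof.
  intros Hx. eapply Rle_trans; [|apply (exp_ge_taylor x k Hx)].
  destruct k.
  - simpl. lra.
  - rewrite tech5. assert (0 <= sum_f_R0 (fun k0 => x ^ k0 / INR (Factorial.fact k0)) k).
    { apply cond_pos_sum. intros n. apply Rmult_le_pos. apply pow_le; auto.
      left; apply Rinv_0_lt_compat, INR_fact_lt_0. }
    lra.
Qed.

Lemma ecoef_radius M A i j x : (i < M)%nat -> (j < M)%nat ->
  Rbar_lt (Rabs x) (CV_radius (ecoef M A i j)).
Proof.
  intros Hi Hj. set (C := INR M * mnorm M A).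
  assert (HC : 0 <= C) by (apply Rmult_le_pos; [apply pos_INR|apply mnorm_nonneg]).
  destruct (CV_radius_bounded (ecoef M A i j)) as [Hub _].
  assert (Hr : Rbar_le (Rabs x + 1) (CV_radius (ecoef M A i j))).
  { apply Hub. exists (exp (C * (Rabs x + 1))). intros n.
    unfold ecoef. rewrite Rabs_mult, Rabs_div, (Rabs_right (INR (Factorial.fact n))).
    2:{ apply Rle_ge, pos_INR. }
    2:{ apply not_0_INR, Factorial.fact_neq_0. }
    rewrite <- RPow_abs. rewrite (Rabs_right (Rabs x + 1)) by (pose proof (Rabs_pos x); lra).
    eapply Rle_trans; [|apply (pow_fact_le_exp _ n)].
    2:{ apply Rmult_le_pos; auto. pose proof (Rabs_pos x); lra. }
    rewrite Rpow_mult_distr. unfold Rdiv.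
    assert (0 < / INR (Factorial.fact n)) by (apply Rinv_0_lt_compat, INR_fact_lt_0).
    assert (0 <= (Rabs x + 1) ^ n) by (apply pow_le; pose proof (Rabs_pos x); lra).
    pose proof (matpow_bound M A n i j Hi Hj). fold C in H1.
    replace (C ^ n * (Rabs x + 1) ^ n * / INR (Factorial.fact n)) with (C ^ n * / INR (Factorial.fact n) * (Rabs x + 1) ^ n) by ring.
    apply Rmult_le_compat_r; auto. apply Rmult_le_compat_r; lra. }
  destruct (CV_radius (ecoef M A i j)); simpl in *; auto. lra.
Qed.

Definition E M A i j r := PSeries (ecoef M A i j) r.

Lemma expmx_E M A r i j : (i < M)%nat -> (j < M)%nat -> expmx M A r i j = E M A i j r.
Proof.
  intros Hi Hj. unfold expmx.
  assert (Hs : infinite_sum (fun k => r ^ k / INR (Factorial.fact k) * matpow M A k i j) (E M A i j r)).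
  { apply is_series_Reals.
    pose proof (PSeries_correct _ _ (CV_radius_inside _ _ (ecoef_radius M A i j r Hi Hj))) as H.
    apply is_pseries_R in H. eapply is_series_ext; [|exact H].
    intros n. unfold ecoef. simpl. field. apply not_0_INR, Factorial.fact_neq_0. }
  pose proof (epsilon_spec (inhabits 0) (fun l => infinite_sum (fun k => r ^ k / INR (Factorial.fact k) * matpow M A k i j) l) (ex_intro _ _ Hs)) as H.
  eapply uniqueness_sum; eauto.
Qed.

Lemma is_series_zero : is_series (fun _ : nat => 0) 0.
Proof.
  pose proof (is_series_scal (K := R_AbsRing) 0 _ _ (proj1 (is_pseries_R _ 0 _) (is_exp_Reals 0))) as H.
  unfold scal in H; simpl in H; unfold mult in H; simpl in H. rewrite Rmult_0_l in H.
  eapply is_series_ext; [|exact H].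
  intros n. simpl. ring.
Qed.

Lemma is_pseries_fsum n (c : nat -> R) (b : nat -> nat -> R) (L : nat -> R) x :
  (forall l, (l < n)%nat -> is_pseries (b l) x (L l)) ->
  is_pseries (fun k => fsum n (fun l => c l * b l k)) x (fsum n (fun l => c l * L l)).
Proof.
  induction n; intros H; apply is_pseries_R; simpl.
  - eapply is_series_ext; [|exact is_series_zero]. intros; simpl; ring.
  - assert (H1 := IHn (fun l Hl => H l ltac:(lia))). apply is_pseries_R in H1.
    assert (H2 := H n ltac:(lia)). apply is_pseries_R in H2.
    pose proof (is_series_scal (K := R_AbsRing) (c n) _ _ H2) as H3.
    pose proof (is_series_plus _ _ _ _ H1 H3) as H4.
    eapply is_series_ext; [|exact H4]. intros k. unfold plus, scal; simpl. unfold mult; simpl. ring.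
Qed.

Lemma E_derive M A i j r : (i < M)%nat -> (j < M)%nat ->
  derivable_pt_lim (E M A i j) r (fsum M (fun l => A i l * E M A l j r)).
Proof.
  intros Hi Hj. apply is_derive_Reals.
  pose proof (is_derive_PSeries _ _ (ecoef_radius M A i j r Hi Hj)) as H.
  replace (fsum M (fun l => A i l * E M A l j r)) with (PSeries (PS_derive (ecoef M A i j)) r); [exact H|].
  apply is_pseries_unique.
  eapply is_pseries_ext; [|apply (is_pseries_fsum M (fun l => A i l) (fun l => ecoef M A l j))].
  - intros n. unfold PS_derive, ecoef. rewrite matpow_S_left by auto.
    unfold Rdiv. rewrite <- fsum_scalr, <- fsum_scal. apply fsum_ext. intros l Hl.
    rewrite fact_simpl, mult_INR. field. split; [apply not_0_INR, Factorial.fact_neq_0|apply not_0_INR; lia].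
  - intros l Hl. apply PSeries_correct, CV_radius_inside, ecoef_radius; auto.
Qed.

Lemma E_cont M A i j r : (i < M)%nat -> (j < M)%nat -> continuity_pt (E M A i j) r.
Proof. intros. eapply derivable_continuous_pt. exists (fsum M (fun l => A i l * E M A l j r)). apply E_derive; auto. Qed.

Lemma E_zero M A i j : E M A i j 0 = if Nat.eq_dec i j then 1 else 0.
Proof. unfold E. rewrite PSeries_0. unfold ecoef. simpl. unfold matid. destruct (Nat.eq_dec i j); simpl; field. Qed.

Lemma RInt_eq f a b : (forall x, continuity_pt f x) -> Defs.RInt f a b = RInt f a b.
Proof.
  intros Hc.
  assert (Hex : ex_RInt f a b).
  { apply (ex_RInt_continuous (V := R_CompleteNormedModule)). intros z _. apply continuity_pt_filterlim, Hc. }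
  pose proof (ex_RInt_Reals_0 _ _ _ Hex) as pr.
  unfold Defs.RInt.
  pose proof (epsilon_spec (inhabits 0) (fun v => exists pr : Riemann_integrable f a b, RiemannInt pr = v)
     (ex_intro _ _ (ex_intro _ pr eq_refl))) as [pr' Hpr'].
  rewrite <- Hpr'. symmetry. apply RInt_Reals.
Qed.

Section Phi.
Variables (M : nat) (Q Qt : nat -> nat -> R) (zeta : nat -> R) (T : R).

Definition al j := alpha M Q Qt zeta j.
Definition hh i r := fsum M (fun j => E M Qt i j r * al j).

Lemma hh_derive i r : (i < M)%nat -> derivable_pt_lim (hh i) r (fsum M (fun l => Qt i l * hh l r)).
Proof.
  intros Hi. unfold hh.
  replace (fsum M (fun l => Qt i l * fsum M (fun j => E M Qt l j r * al j)))
    with (fsum M (fun j => fsum M (fun l => Qt i l * E M Qt l j r) * al j)).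
  - apply (fsum_derive M (fun j y => E M Qt i j y * al j)). intros j Hj.
    apply derivable_pt_lim_scal_right. apply E_derive; auto.
  - transitivity (fsum M (fun j => fsum M (fun l => Qt i l * E M Qt l j r * al j))).
    { apply fsum_ext; intros. rewrite <- fsum_scalr. apply fsum_ext; intros; ring. }
    rewrite fsum_swap. apply fsum_ext. intros l Hl. rewrite <- fsum_scal. apply fsum_ext; intros. ring.
Qed.

Lemma hh_cont i r : (i < M)%nat -> continuity_pt (hh i) r.
Proof. intros. eapply derivable_continuous_pt. eexists. apply hh_derive; auto. Qed.

Lemma hhT_cont i r : (i < M)%nat -> continuity_pt (fun s => hh i (T - s)) r.
Proof.
  intros Hi. apply (continuity_pt_comp (fun s => T - s) (hh i)).
  - apply continuity_pt_minus. apply continuity_pt_const; intros a b; auto. apply continuity_pt_id.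
  - apply hh_cont; auto.
Qed.

Lemma phi_eq i : (i < M)%nat -> phi M Q Qt zeta T i = fun t => - RInt (fun s => hh i (T - s)) t T.
Proof.
  intros Hi. apply functional_extensionality. intros t. unfold phi.
  replace (fun s => fsum M (fun j => expmx M Qt (T - s) i j * alpha M Q Qt zeta j)) with (fun s => hh i (T - s)).
  - rewrite RInt_eq; auto. intros; apply hhT_cont; auto.
  - apply functional_extensionality; intros s. unfold hh. apply fsum_ext. intros j Hj.
    rewrite expmx_E; auto.
Qed.

Lemma phi_T i : (i < M)%nat -> phi M Q Qt zeta T i T = 0.
Proof. intros Hi. rewrite phi_eq; auto. rewrite RInt_point. unfold zero; simpl. ring. Qed.

Lemma phi_derive0 i t : (i < M)%nat -> derivable_pt_lim (phi M Q Qt zeta T i) t (hh i (T - t)).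
Proof.
  intros Hi. rewrite phi_eq; auto. apply is_derive_Reals.
  assert (Hex : forall a, ex_RInt (fun s => hh i (T - s)) a T).
  { intros a. apply (ex_RInt_continuous (V := R_CompleteNormedModule)). intros z _. apply continuity_pt_filterlim, hhT_cont; auto. }
  pose proof (is_derive_RInt' (fun s => hh i (T - s)) (fun a => RInt (fun s => hh i (T - s)) a T) t T) as H.
  assert (H' : is_derive (fun a => RInt (fun s => hh i (T - s)) a T) t (opp (hh i (T - t)))).
  { apply H. exists (mkposreal 1 Rlt_0_1). intros y _. apply (RInt_correct (V := R_CompleteNormedModule)), Hex.
    apply continuity_pt_filterlim, hhT_cont; auto. }
  pose proof (is_derive_opp _ _ _ H') as H2.
  unfold opp in H2; simpl in H2. rewrite Ropp_involutive in H2. exact H2.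
Qed.

Lemma phi_cont i t : (i < M)%nat -> continuity_pt (phi M Q Qt zeta T i) t.
Proof. intros. eapply derivable_continuous_pt. eexists. apply phi_derive0; auto. Qed.

Definition dphi i t := al i + sumoff M i (fun j => Qt i j * (phi M Q Qt zeta T i t - phi M Q Qt zeta T j t)).

Lemma sumoff_derive n i (f : nat -> R -> R) df x :
  (forall k, (k < n)%nat -> k <> i -> derivable_pt_lim (f k) x (df k)) ->
  derivable_pt_lim (fun y => sumoff n i (fun k => f k y)) x (sumoff n i df).
Proof.
  intros H. unfold sumoff.
  apply (fsum_derive n (fun k y => if Nat.eq_dec k i then 0 else f k y)).
  intros k Hk. destruct (Nat.eq_dec k i). apply derivable_pt_lim_const. apply H; auto.
Qed.

Lemma sumoff_cont n i (f : nat -> R -> R) x :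
  (forall k, (k < n)%nat -> k <> i -> continuity_pt (f k) x) ->
  continuity_pt (fun y => sumoff n i (fun k => f k y)) x.
Proof.
  intros H. unfold sumoff.
  apply (fsum_cont n (fun k y => if Nat.eq_dec k i then 0 else f k y)).
  intros k Hk. destruct (Nat.eq_dec k i). apply continuity_pt_const; intros a b; auto. apply H; auto.
Qed.

Lemma dphi_cont i t : (i < M)%nat -> continuity_pt (dphi i) t.
Proof.
  intros Hi. unfold dphi.
  apply (continuity_pt_plus (fun _ => al i) (fun t => sumoff M i (fun j => Qt i j * (phi M Q Qt zeta T i t - phi M Q Qt zeta T j t)))).
  apply continuity_pt_const; intros a b; auto.
  apply (sumoff_cont M i (fun j t => Qt i j * (phi M Q Qt zeta T i t - phi M Q Qt zeta T j t))).
  intros k Hk _. apply (continuity_pt_mult (fun _ => Qt i k) (fun t => phi M Q Qt zeta T i t - phi M Q Qt zeta T k t)).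
  apply continuity_pt_const; intros a b; auto.
  apply (continuity_pt_minus (phi M Q Qt zeta T i) (phi M Q Qt zeta T k)); apply phi_cont; auto.
Qed.

Hypothesis HQt : is_generator M Qt.

Lemma rowsum i (f : nat -> R) : (i < M)%nat ->
  fsum M (fun l => Qt i l * f l) = sumoff M i (fun j => Qt i j * (f j - f i)).
Proof.
  intros Hi. destruct HQt as [_ Hrow]. pose proof (Hrow i Hi) as H.
  rewrite (fsum_split M i) in H by auto.
  rewrite (fsum_split M i) by auto.
  assert (Hs : sumoff M i (fun j => Qt i j * (f j - f i)) = sumoff M i (fun j => Qt i j * f j) - f i * sumoff M i (fun j => Qt i j)).
  { rewrite <- sumoff_scal, <- sumoff_minus. apply sumoff_ext; intros; ring. }
  rewrite Hs. replace (Qt i i) with (- sumoff M i (fun j => Qt i j)) by lra. ring.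
Qed.

Lemma key i t : (i < M)%nat -> hh i (T - t) = dphi i t.
Proof.
  intros Hi.
  set (k := fun t => hh i (T - t) - dphi i t).
  assert (Hd : forall x, derivable_pt_lim k x 0).
  { intros x. unfold k, dphi.
    set (F := fun t => sumoff M i (fun j => Qt i j * (phi M Q Qt zeta T i t - phi M Q Qt zeta T j t))).
    assert (H1 : derivable_pt_lim (fun t => hh i (T - t)) x (fsum M (fun l => Qt i l * hh l (T - x)) * (-1))).
    { apply (derivable_pt_lim_comp (fun t => T - t) (hh i)).
      - replace (-1) with (0 - 1) by ring. apply derivable_pt_lim_minus. apply derivable_pt_lim_const. apply derivable_pt_lim_id.
      - apply hh_derive; auto. }
    assert (H2 : derivable_pt_lim F x (sumoff M i (fun j => Qt i j * (hh i (T - x) - hh j (T - x))))).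
    { apply (sumoff_derive M i (fun j t => Qt i j * (phi M Q Qt zeta T i t - phi M Q Qt zeta T j t))).
      intros j Hj Hji. apply derivable_pt_lim_scal. apply (derivable_pt_lim_minus (phi M Q Qt zeta T i) (phi M Q Qt zeta T j)); apply phi_derive0; auto. }
    assert (H3 := derivable_pt_lim_plus (fun _ => al i) F x 0 _ (derivable_pt_lim_const (al i) x) H2).
    pose proof (derivable_pt_lim_minus _ _ x _ _ H1 H3) as H4.
    replace 0 with (fsum M (fun l => Qt i l * hh l (T - x)) * -1 - (0 + sumoff M i (fun j => Qt i j * (hh i (T - x) - hh j (T - x))))).
    exact H4.
    rewrite rowsum by auto.
    replace (sumoff M i (fun j => Qt i j * (hh i (T - x) - hh j (T - x)))) with (-1 * sumoff M i (fun j => Qt i j * (hh j (T - x) - hh i (T - x)))).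
    ring. rewrite <- sumoff_scal. apply sumoff_ext; intros; ring. }
  assert (HkT : k T = 0).
  { unfold k, dphi, hh. rewrite Rminus_diag.
    rewrite (fsum_ext M _ (fun j => (if Nat.eq_dec i j then 1 else 0) * al j)).
    2:{ intros j Hj. rewrite E_zero. auto. }
    rewrite fsum_delta by auto.
    rewrite (sumoff_ext M i _ (fun _ => 0)). unfold sumoff. rewrite fsum_zero. ring.
    intros; destruct (Nat.eq_dec k0 i); auto.
    intros j Hj _. rewrite !phi_T; auto. ring. }
  assert (Hk : k t = 0).
  { destruct (MVT_gen k t T (fun _ => 0)) as [c [_ Hc]].
    - intros x _. apply is_derive_Reals, Hd.
    - intros x _. eapply derivable_continuous_pt. exists 0. apply Hd.
    - lra. }
  unfold k in Hk. lra.
Qed.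

Lemma phi_derive i t : (i < M)%nat -> derivable_pt_lim (phi M Q Qt zeta T i) t (dphi i t).
Proof. intros Hi. rewrite <- key; auto. apply phi_derive0; auto. Qed.

End Phi.

Definition cl (T x : R) := Rmax 0 (Rmin T x).

Lemma cl_dist T x y : 0 <= x <= T -> Rabs (cl T y - x) <= Rabs (y - x).
Proof.
  intros H. unfold cl, Rmax, Rmin. repeat destruct Rle_dec; unfold Rabs; repeat destruct Rcase_abs; lra.
Qed.

Lemma cl_in T x : 0 <= T -> 0 <= cl T x <= T.
Proof. intros H. unfold cl, Rmax, Rmin. repeat destruct Rle_dec; lra. Qed.

Lemma cl_id T x : 0 <= x <= T -> cl T x = x.
Proof. intros H. unfold cl, Rmax, Rmin. repeat destruct Rle_dec; lra. Qed.

Lemma cl_cont (f : R -> R) T x : 0 <= x <= T ->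
  continue_in f (fun y => 0 <= y <= T) x -> continuity_pt (fun y => f (cl T y)) x.
Proof.
  intros Hx H. unfold continuity_pt, continue_in, limit1_in, limit_in, D_x, no_cond in *. simpl in *. unfold R_dist in *.
  intros eps Heps. destruct (H eps Heps) as [alp [Halp Hd]]. exists alp. split; auto.
  intros y [_ Hy]. rewrite (cl_id T x) by auto.
  destruct (Req_dec (cl T y) x) as [E|E].
  - rewrite E, Rminus_diag, Rabs_R0. auto.
  - apply Hd. split. split. apply cl_in; lra. auto.
    eapply Rle_lt_trans; [apply cl_dist; auto|]. auto.
Qed.

Lemma cl_derive (f : R -> R) T x l : 0 < x < T -> derivable_pt_lim f x l ->
  derivable_pt_lim (fun y => f (cl T y)) x l.
Proof.
  intros Hx H. apply is_derive_Reals. apply is_derive_Reals in H.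
  eapply is_derive_ext_loc; [|exact H].
  assert (He : 0 < Rmin x (T - x)) by (apply Rmin_pos; lra).
  exists (mkposreal _ He). intros y Hy. unfold ball in Hy; simpl in Hy. unfold AbsRing_ball, abs, minus, plus, opp in Hy; simpl in Hy.
  rewrite cl_id; auto. pose proof (Rmin_l x (T - x)). pose proof (Rmin_r x (T - x)).
  unfold Rabs in Hy; destruct Rcase_abs in Hy; lra.
Qed.

Lemma sq_bound a b q V : a * a <= V -> b * b <= V ->
  Rabs (2 * a * (q * (a - b))) <= Rabs q * (4 * V).
Proof.
  intros Ha Hb.
  replace (2 * a * (q * (a - b))) with (q * (2 * a * (a - b))) by ring.
  rewrite Rabs_mult. apply Rmult_le_compat_l. apply Rabs_pos.
  apply Rabs_le. split; nra.
Qed.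

Section Uniq.
Variables (M : nat) (Q Qt : nat -> nat -> R) (zeta : nat -> R) (T : R).
Hypothesis HQt : is_generator M Qt.
Hypothesis HT : 0 < T.
Variables (psi dpsi : nat -> R -> R).
Hypothesis Hpsi : forall i, (i < M)%nat ->
        (forall t, 0 <= t <= T -> continue_in (psi i) (fun x => 0 <= x <= T) t) /\
        (forall t, 0 < t < T ->
           derivable_pt_lim (psi i) t (dpsi i t) /\
           dpsi i t - sumoff M i (fun j => Qt i j * (psi i t - psi j t))
             - alpha M Q Qt zeta i = 0) /\
        psi i T = 0.

Let ph := phi M Q Qt zeta T.
Let dd i x := psi i (cl T x) - ph i x.
Let V x := fsum M (fun i => dd i x * dd i x).
Let K := 4 * mnorm M Qt.
Let W x := V x * exp (K * x).
Let dV x := fsum M (fun i => 2 * dd i x * (dpsi i x - dphi M Q Qt zeta T i x)).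
Let dW x := (dV x + K * V x) * exp (K * x).

Lemma dd_cont i x : (i < M)%nat -> 0 <= x <= T -> continuity_pt (dd i) x.
Proof.
  intros Hi Hx. unfold dd. apply (continuity_pt_minus (fun y => psi i (cl T y)) (ph i)).
  apply cl_cont; auto. apply Hpsi; auto. apply phi_cont; auto.
Qed.

Lemma W_cont x : 0 <= x <= T -> continuity_pt W x.
Proof.
  intros Hx. unfold W. apply (continuity_pt_mult V (fun x => exp (K * x))).
  - unfold V. apply (fsum_cont M (fun i x => dd i x * dd i x)). intros k Hk.
    apply (continuity_pt_mult (dd k) (dd k)); apply dd_cont; auto.
  - apply (continuity_pt_comp (fun x => K * x) exp).
    apply (continuity_pt_mult (fun _ => K) (fun x => x)). apply continuity_pt_const; intros a b; auto. apply continuity_pt_id.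
    apply derivable_continuous_pt. apply derivable_pt_exp.
Qed.

Lemma W_derive x : 0 < x < T -> derivable_pt_lim W x (dW x).
Proof.
  intros Hx. unfold W, dW.
  assert (HV : derivable_pt_lim V x (dV x)).
  { unfold V, dV. apply (fsum_derive M (fun i x => dd i x * dd i x)). intros k Hk.
    assert (Hd : derivable_pt_lim (dd k) x (dpsi k x - dphi M Q Qt zeta T k x)).
    { unfold dd. apply (derivable_pt_lim_minus (fun y => psi k (cl T y)) (ph k)).
      apply cl_derive; auto. apply Hpsi; auto. apply phi_derive; auto. }
    replace (2 * dd k x * (dpsi k x - dphi M Q Qt zeta T k x)) with
      ((dpsi k x - dphi M Q Qt zeta T k x) * dd k x + dd k x * (dpsi k x - dphi M Q Qt zeta T k x)) by ring.
    apply (derivable_pt_lim_mult (dd k) (dd k)); auto. }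
  assert (HE : derivable_pt_lim (fun x => exp (K * x)) x (exp (K * x) * K)).
  { apply (derivable_pt_lim_comp (fun x => K * x) exp).
    pose proof (derivable_pt_lim_scal id K x 1 (derivable_pt_lim_id x)) as HK. rewrite Rmult_1_r in HK. exact HK.
    apply derivable_pt_lim_exp. }
  replace ((dV x + K * V x) * exp (K * x)) with (dV x * exp (K * x) + V x * (exp (K * x) * K)) by ring.
  apply (derivable_pt_lim_mult V (fun x => exp (K * x))); auto.
Qed.

Lemma dd_sq_le i x : (i < M)%nat -> dd i x * dd i x <= V x.
Proof. intros Hi. unfold V. apply (fsum_term_le M (fun i => dd i x * dd i x)); auto. intros; nra. Qed.

Lemma dW_nonneg x : 0 < x < T -> 0 <= dW x.
Proof.
  intros Hx. unfold dW. apply Rmult_le_pos; [|left; apply exp_pos].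
  assert (Hode : forall i, (i < M)%nat -> dpsi i x - dphi M Q Qt zeta T i x = sumoff M i (fun j => Qt i j * (dd i x - dd j x))).
  { intros i Hi. destruct (Hpsi i Hi) as [_ [Hder _]]. destruct (Hder x Hx) as [_ Hode].
    unfold dphi, al.
    rewrite (sumoff_ext M i (fun j => Qt i j * (dd i x - dd j x)) (fun j => Qt i j * (psi i x - psi j x) - Qt i j * (ph i x - ph j x))).
    2:{ intros j Hj _. unfold dd. rewrite !cl_id by lra. ring. }
    rewrite sumoff_minus. unfold ph. lra. }
  assert (Hb : Rabs (dV x) <= K * V x).
  { unfold dV. rewrite (fsum_ext M _ (fun i => sumoff M i (fun j => 2 * dd i x * (Qt i j * (dd i x - dd j x))))).
    2:{ intros i Hi. rewrite Hode by auto. rewrite sumoff_scal. auto. }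
    eapply Rle_trans; [apply fsum_abs|].
    eapply Rle_trans; [apply (fsum_le M _ (fun i => fsum M (fun j => Rabs (Qt i j) * (4 * V x))))|].
    - intros i Hi. eapply Rle_trans; [apply sumoff_abs|]. apply fsum_le. intros j Hj. apply sq_bound; apply dd_sq_le; auto.
    - right. unfold K, mnorm. rewrite (fsum_ext M _ (fun i => fsum M (fun j => Rabs (Qt i j)) * (4 * V x))).
      rewrite fsum_scalr. ring. intros i Hi. rewrite fsum_scalr. auto. }
  assert (- dV x <= K * V x) by (eapply Rle_trans; [apply Rle_abs|rewrite Rabs_Ropp; exact Hb]).
  lra.
Qed.

Lemma V_nonneg x : 0 <= V x.
Proof. unfold V. apply fsum_nonneg. intros; nra. Qed.

Lemma uniq_main i t : (i < M)%nat -> 0 <= t <= T -> psi i t = ph i t.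
Proof.
  intros Hi Ht.
  assert (HWT : W T = 0).
  { unfold W, V. rewrite fsum_zero. ring. intros k Hk. unfold dd. rewrite cl_id by lra.
    destruct (Hpsi k Hk) as [_ [_ HT0]]. rewrite HT0. unfold ph. rewrite phi_T; auto. ring. }
  assert (HWt : W t <= 0).
  { destruct (Req_dec t T) as [E|E]. subst; lra.
    destruct (MVT_gen W t T (fun x => Rmax 0 (dW x))) as [c [Hc Heq]].
    - intros x Hx. rewrite Rmin_left, Rmax_right in Hx by lra.
      rewrite Rmax_right by (apply dW_nonneg; lra). apply is_derive_Reals, W_derive; lra.
    - intros x Hx. rewrite Rmin_left, Rmax_right in Hx by lra. apply W_cont; lra.
    - pose proof (Rmax_l 0 (dW c)). nra. }
  assert (HV0 : V t = 0).
  { unfold W in HWt. pose proof (V_nonneg t). pose proof (exp_pos (K * t)). nra. }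
  pose proof (dd_sq_le i t Hi). unfold dd in H. rewrite cl_id in H by lra. nra.
Qed.

End Uniq.

Section Gap.
Variables (g qt q a b w : R).
Hypotheses (Hg : 0 < g) (Hqt : 0 < qt) (Hq : 0 < q).
Definition Gf p := - (qt * p) * (g * exp (- g * w + a)) + q * (- exp (- g * (w + p) + b) - - exp (- g * w + a)).
Definition pst := - / g * (ln (qt / q) + a - b).
Definition gval := exp (- g * w + a) * (qt * ln (qt / q) - qt + q + qt * (a - b)).

Lemma gap_facts p : gval - Gf p = exp (- g * w + a) * qt * (exp (- g * (p - pst)) - (1 + - g * (p - pst))).
Proof.
  assert (H1 : exp (- g * (w + p) + b) = exp (- g * w + a) * (qt / q) * exp (- g * (p - pst))).
  { rewrite <- (exp_ln (qt / q)) by (apply Rdiv_lt_0_compat; auto).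
    rewrite <- !exp_plus. f_equal. unfold pst. field. lra. }
  unfold gval, Gf. rewrite H1.
  assert (H2 : - g * pst = ln (qt / q) + a - b) by (unfold pst; field; lra).
  replace (ln (qt / q)) with (- g * pst - a + b) by lra.
  field. lra.
Qed.

Lemma gap_le p : Gf p <= gval.
Proof.
  pose proof (gap_facts p). pose proof (exp_ineq1_le (- g * (p - pst))).
  pose proof (exp_pos (- g * w + a)).
  assert (0 <= exp (- g * w + a) * qt * (exp (- g * (p - pst)) - (1 + - g * (p - pst)))).
  { apply Rmult_le_pos; [|lra]. apply Rmult_le_pos; lra. }
  lra.
Qed.

Lemma gap_eq : Gf pst = gval.
Proof. pose proof (gap_facts pst). rewrite Rminus_diag, Rmult_0_r, Rplus_0_r, exp_0 in H. lra. Qed.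

Lemma gap_uniq p : Gf p = gval -> p = pst.
Proof.
  intros Heq. destruct (Req_dec p pst) as [E|E]; auto. exfalso.
  pose proof (gap_facts p). pose proof (exp_ineq1 (- g * (p - pst))).
  assert (- g * (p - pst) <> 0). { intros Hc. apply E. apply Rmult_integral in Hc. destruct Hc; lra. }
  specialize (H0 H1). pose proof (exp_pos (- g * w + a)).
  assert (0 < exp (- g * w + a) * qt * (exp (- g * (p - pst)) - (1 + - g * (p - pst)))).
  { apply Rmult_lt_0_compat; [|lra]. apply Rmult_lt_0_compat; lra. }
  lra.
Qed.
End Gap.

Section HJB.
Variables (M : nat) (Q Qt : nat -> nat -> R) (zeta : nat -> R) (T gamma : R).
Hypotheses (HQ : is_generator M Q) (HQt : is_generator M Qt)
  (Hzero : forall i j, (i < M)%nat -> (j < M)%nat -> i <> j -> (Q i j = 0 <-> Qt i j = 0))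
  (Hgamma : 0 < gamma).
Variables (i : nat) (t w : R).
Hypothesis Hi : (i < M)%nat.

Let ph := phi M Q Qt zeta T.
Let Ei := exp (- gamma * w + ph i t).
Let GG (p : nat -> R) j := Gf gamma (Qt i j) (Q i j) (ph i t) (ph j t) w (p j).
Let gstar j := if Rlt_dec 0 (Q i j) then gval gamma (Qt i j) (Q i j) (ph i t) (ph j t) w else 0.

Lemma H_decomp pi0 p :
  hjb_H M Q Qt zeta T gamma i t w (gamma * Ei) (- gamma ^ 2 * Ei) pi0 p =
  Ei * (zeta i * pi0 * gamma - pi0 ^ 2 / 2 * gamma ^ 2) + sumoff M i (GG p).
Proof.
  unfold hjb_H, u, GG.
  rewrite (sumoff_ext M i (fun j => Gf gamma (Qt i j) (Q i j) (ph i t) (ph j t) w (p j))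
     (fun j => (- (gamma * Ei)) * (Qt i j * p j) +
       Q i j * (- exp (- gamma * (w + p j) + ph j t) - - exp (- gamma * w + ph i t)))).
  2:{ intros; unfold Gf, Ei; ring. }
  rewrite sumoff_plus, sumoff_scal. unfold ph, Ei. ring.
Qed.

Lemma offdiag j : (j < M)%nat -> j <> i -> ~ 0 < Q i j -> Q i j = 0 /\ Qt i j = 0.
Proof.
  intros Hj Hji Hn. destruct HQ as [HQ1 _]. pose proof (HQ1 i j Hi Hj (fun e => Hji (eq_sym e))).
  assert (Q i j = 0) by lra. split; auto. apply (Hzero i j); auto.
Qed.

Lemma qt_pos j : (j < M)%nat -> j <> i -> 0 < Q i j -> 0 < Qt i j.
Proof.
  intros Hj Hji Hq. destruct HQt as [HQ1 _]. pose proof (HQ1 i j Hi Hj (fun e => Hji (eq_sym e))).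
  destruct H as [H|H]; auto. exfalso. symmetry in H. apply (Hzero i j) in H; auto. lra.
Qed.

Lemma GG_le p j : (j < M)%nat -> j <> i -> GG p j <= gstar j.
Proof.
  intros Hj Hji. unfold GG, gstar. destruct (Rlt_dec 0 (Q i j)).
  - apply gap_le; auto. apply qt_pos; auto.
  - destruct (offdiag j Hj Hji n) as [E1 E2]. unfold Gf. rewrite E1, E2. lra.
Qed.

Lemma GG_star j : (j < M)%nat -> j <> i -> GG (pij_star M Q Qt zeta T gamma i t) j = gstar j.
Proof.
  intros Hj Hji. unfold GG, gstar. destruct (Rlt_dec 0 (Q i j)).
  - apply gap_eq; auto. apply qt_pos; auto.
  - destruct (offdiag j Hj Hji n) as [E1 E2]. unfold Gf. rewrite E1, E2. lra.
Qed.

Lemma target_eq : Ei * dphi M Q Qt zeta T i t = Ei * (zeta i ^ 2 / 2) + sumoff M i gstar.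
Proof.
  unfold dphi, al, alpha.
  rewrite (sumoff_ext M i gstar (fun j => Ei * ((if Rlt_dec 0 (Q i j) then Qt i j * ln (Qt i j / Q i j) - Qt i j + Q i j else 0)
        + Qt i j * (ph i t - ph j t)))).
  - rewrite sumoff_scal, sumoff_plus. unfold ph. ring.
  - intros j Hj Hji. unfold gstar, gval, Ei. destruct (Rlt_dec 0 (Q i j)). ring.
    destruct (offdiag j Hj Hji n) as [E1 E2]. rewrite E2. ring.
Qed.

Lemma Ei_pos : 0 < Ei.
Proof. apply exp_pos. Qed.

Lemma hjb_le pi0 p :
  hjb_H M Q Qt zeta T gamma i t w (gamma * Ei) (- gamma ^ 2 * Ei) pi0 p <= Ei * dphi M Q Qt zeta T i t.
Proof.
  rewrite H_decomp, target_eq.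
  assert (sumoff M i (GG p) <= sumoff M i gstar) by (apply sumoff_le; intros; apply GG_le; auto).
  pose proof Ei_pos.
  assert (Ei * (zeta i * pi0 * gamma - pi0 ^ 2 / 2 * gamma ^ 2) <= Ei * (zeta i ^ 2 / 2)).
  { apply Rmult_le_compat_l; [lra|]. pose proof (pow2_ge_0 (gamma * pi0 - zeta i)). nra. }
  lra.
Qed.

Lemma hjb_star :
  hjb_H M Q Qt zeta T gamma i t w (gamma * Ei) (- gamma ^ 2 * Ei)
    (pi0_star zeta gamma i) (pij_star M Q Qt zeta T gamma i t) = Ei * dphi M Q Qt zeta T i t.
Proof.
  rewrite H_decomp, target_eq.
  rewrite (sumoff_ext M i _ gstar) by (intros; apply GG_star; auto).
  unfold pi0_star. f_equal. f_equal. field. lra.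
Qed.

Lemma hjb_uniq pi0 p :
  hjb_H M Q Qt zeta T gamma i t w (gamma * Ei) (- gamma ^ 2 * Ei) pi0 p = Ei * dphi M Q Qt zeta T i t ->
  pi0 = pi0_star zeta gamma i /\
  forall j, (j < M)%nat -> j <> i -> 0 < Q i j -> p j = pij_star M Q Qt zeta T gamma i t j.
Proof.
  rewrite H_decomp, target_eq. intros Heq.
  pose proof Ei_pos.
  assert (Hs : sumoff M i (fun j => gstar j - GG p j) = - (Ei * (zeta i ^ 2 / 2) - Ei * (zeta i * pi0 * gamma - pi0 ^ 2 / 2 * gamma ^ 2))).
  { rewrite sumoff_minus. lra. }
  assert (H0 : 0 <= sumoff M i (fun j => gstar j - GG p j)).
  { unfold sumoff. apply fsum_nonneg. intros j Hj. destruct (Nat.eq_dec j i). lra.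
    pose proof (GG_le p j Hj n). lra. }
  assert (H1 : Ei * (zeta i ^ 2 / 2) - Ei * (zeta i * pi0 * gamma - pi0 ^ 2 / 2 * gamma ^ 2) = Ei * ((gamma * pi0 - zeta i) ^ 2 / 2)).
  { unfold Ei. field. }
  assert (H2 : 0 <= Ei * ((gamma * pi0 - zeta i) ^ 2 / 2)) by (apply Rmult_le_pos; [lra|]; pose proof (pow2_ge_0 (gamma * pi0 - zeta i)); lra).
  assert (H3 : Ei * ((gamma * pi0 - zeta i) ^ 2 / 2) = 0) by lra.
  split.
  - unfold pi0_star. apply Rmult_integral in H3. destruct H3 as [H3|H3]; [lra|].
    assert (H4 : (gamma * pi0 - zeta i) ^ 2 = 0) by lra. assert (H5 : gamma * pi0 - zeta i = 0) by (apply Rsqr_0_uniq; unfold Rsqr; simpl in H4; lra).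
    replace pi0 with (gamma * pi0 / gamma) by (field; lra). replace (gamma * pi0) with (zeta i) by lra. auto.
  - intros j Hj Hji Hq.
    assert (Hz : sumoff M i (fun j => gstar j - GG p j) = 0) by lra.
    assert (Hnn : forall k, (k < M)%nat -> k <> i -> 0 <= gstar k - GG p k).
    { intros k Hk Hki. pose proof (GG_le p k Hk Hki). lra. }
    pose proof (sumoff_nonneg_zero M i _ j Hnn Hz Hj Hji) as Hj0.
    simpl in Hj0. unfold gstar, GG in Hj0. destruct (Rlt_dec 0 (Q i j)); [|lra].
    unfold pij_star. apply (gap_uniq gamma (Qt i j) (Q i j) (ph i t) (ph j t) w); auto.
    apply qt_pos; auto. lra.
Qed.

End HJB.

Lemma dw1 gamma c w : derivable_pt_lim (fun x => - exp (- gamma * x + c)) w (gamma * exp (- gamma * w + c)).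
Proof. apply is_derive_Reals. auto_derive; auto. ring. Qed.

Lemma dw2 gamma c w : derivable_pt_lim (fun x => gamma * exp (- gamma * x + c)) w (- gamma ^ 2 * exp (- gamma * w + c)).
Proof. apply is_derive_Reals. auto_derive; auto. ring. Qed.

Lemma dt1 gamma w (f : R -> R) t l : derivable_pt_lim f t l ->
  derivable_pt_lim (fun s => - exp (- gamma * w + f s)) t (- exp (- gamma * w + f t) * l).
Proof.
  intros Hf. apply is_derive_Reals. apply is_derive_Reals in Hf.
  assert (H := is_derive_comp exp (fun s => - gamma * w + f s) t (exp (- gamma * w + f t)) l).
  assert (H1 : is_derive exp (- gamma * w + f t) (exp (- gamma * w + f t))) by (auto_derive; auto; ring).
  assert (H2 : is_derive (fun s => - gamma * w + f s) t l).
  { apply is_derive_Reals. replace l with (0 + l) by ring. apply (derivable_pt_lim_plus (fun _ => - gamma * w) f).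
    apply derivable_pt_lim_const. apply is_derive_Reals; auto. }
  specialize (H H1 H2). pose proof (is_derive_opp _ _ _ H) as H3.
  unfold opp in H3; simpl in H3. replace (- exp (- gamma * w + f t) * l) with (- (l * exp (- gamma * w + f t))) by ring.
  exact H3.
Qed.

Lemma c2d_strip T f : (forall t w, continuity_2d_pt f t w) -> cont_on_strip T f.
Proof.
  intros H t w _ eps Heps. destruct (H t w (mkposreal eps Heps)) as [d Hd].
  exists d. split. apply cond_pos. intros t' w' _ H1 H2. apply Hd; auto.
Qed.

Lemma c2d_expw gamma (f : R -> R) t w : continuity_pt f t ->
  continuity_2d_pt (fun t w => exp (- gamma * w + f t)) t w.
Proof.
  intros Hf. apply (continuity_1d_2d_pt_comp exp (fun t w => - gamma * w + f t)).
  apply derivable_continuous_pt, derivable_pt_exp.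
  apply (continuity_2d_pt_plus (fun t w => - gamma * w) (fun t w => f t)).
  apply (continuity_2d_pt_mult (fun _ _ => - gamma) (fun _ w => w)). apply continuity_2d_pt_const. apply continuity_2d_pt_id2.
  apply (continuity_1d_2d_pt_comp f (fun t _ => t)); auto. apply continuity_2d_pt_id1.
Qed.

Theorem mainTheorem1 (M : nat) (Q Qt : nat -> nat -> R) (zeta : nat -> R)
  (gamma T : R)
  (HQ : is_generator M Q) (HQt : is_generator M Qt)
  (Hzero : forall i j, (i < M)%nat -> (j < M)%nat -> i <> j ->
             (Q i j = 0 <-> Qt i j = 0))
  (Hirr : irreducible M Qt)
  (Hgamma : 0 < gamma) (HT : 0 < T) :
  (* (1) phi solves the linear ODE system with terminal condition *)
  (exists dphi : nat -> R -> R,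
     forall i, (i < M)%nat ->
       (forall t, 0 <= t <= T ->
          derivable_pt_lim (phi M Q Qt zeta T i) t (dphi i t) /\
          dphi i t
            - sumoff M i (fun j => Qt i j * (phi M Q Qt zeta T i t - phi M Q Qt zeta T j t))
            - alpha M Q Qt zeta i = 0) /\
       phi M Q Qt zeta T i T = 0) /\
  (* (2) uniqueness: any solution (continuous on [0,T], differentiable on (0,T)) equals phi *)
  (forall (psi dpsi : nat -> R -> R),
     (forall i, (i < M)%nat ->
        (forall t, 0 <= t <= T -> continue_in (psi i) (fun x => 0 <= x <= T) t) /\
        (forall t, 0 < t < T ->
           derivable_pt_lim (psi i) t (dpsi i t) /\
           dpsi i t - sumoff M i (fun j => Qt i j * (psi i t - psi j t))
             - alpha M Q Qt zeta i = 0) /\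
        psi i T = 0) ->
     forall i t, (i < M)%nat -> 0 <= t <= T -> psi i t = phi M Q Qt zeta T i t) /\
  (* (3) u is a classical solution of the HJB system, with explicit optimizer *)
  (forall i, (i < M)%nat ->
     exists Ut Uw Uww : R -> R -> R,
       (forall t w, 0 <= t <= T ->
          derivable_pt_lim (fun s => u M Q Qt zeta T gamma i s w) t (Ut t w) /\
          derivable_pt_lim (fun x => u M Q Qt zeta T gamma i t x) w (Uw t w) /\
          derivable_pt_lim (fun x => Uw t x) w (Uww t w)) /\
       cont_on_strip T Ut /\ cont_on_strip T Uw /\ cont_on_strip T Uww /\
       (forall w, u M Q Qt zeta T gamma i T w = - exp (- gamma * w)) /\
       (forall t w, 0 <= t <= T ->
          Uww t w = gamma ^ 2 * u M Q Qt zeta T gamma i t w /\ Uww t w < 0) /\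
       (forall t w, 0 <= t < T ->
          is_lub (fun y => exists (pi0 : R) (p : nat -> R),
                     y = hjb_H M Q Qt zeta T gamma i t w (Uw t w) (Uww t w) pi0 p)
                 (- Ut t w) /\
          hjb_H M Q Qt zeta T gamma i t w (Uw t w) (Uww t w)
            (pi0_star zeta gamma i) (pij_star M Q Qt zeta T gamma i t) = - Ut t w /\
          (forall (pi0 : R) (p : nat -> R),
             hjb_H M Q Qt zeta T gamma i t w (Uw t w) (Uww t w) pi0 p = - Ut t w ->
             pi0 = pi0_star zeta gamma i /\
             forall j, (j < M)%nat -> j <> i -> 0 < Q i j ->
               p j = pij_star M Q Qt zeta T gamma i t j))).
Proof.
  split; [|split].
  - exists (dphi M Q Qt zeta T). intros i Hi. split.
    + intros t _. split. apply phi_derive; auto. unfold dphi, al. ring.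
    + apply phi_T; auto.
  - intros psi dpsi Hpsi i t Hi Ht. eapply uniq_main; eauto.
  - intros i Hi.
    exists (fun t w => - exp (- gamma * w + phi M Q Qt zeta T i t) * dphi M Q Qt zeta T i t),
           (fun t w => gamma * exp (- gamma * w + phi M Q Qt zeta T i t)),
           (fun t w => - gamma ^ 2 * exp (- gamma * w + phi M Q Qt zeta T i t)).
    split; [|split; [|split; [|split; [|split; [|split]]]]].
    + intros t w _. split; [|split].
      * unfold u. apply dt1. apply phi_derive; auto.
      * unfold u. apply dw1.
      * apply dw2.
    + apply c2d_strip. intros t w.
      apply (continuity_2d_pt_mult (fun t w => - exp (- gamma * w + phi M Q Qt zeta T i t)) (fun t _ => dphi M Q Qt zeta T i t)).
      apply (continuity_2d_pt_opp (fun t w => exp (- gamma * w + phi M Q Qt zeta T i t))).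
      apply c2d_expw, phi_cont; auto.
      apply (continuity_1d_2d_pt_comp (dphi M Q Qt zeta T i) (fun t _ => t)). apply dphi_cont; auto. apply continuity_2d_pt_id1.
    + apply c2d_strip. intros t w.
      apply (continuity_2d_pt_mult (fun _ _ => gamma) (fun t w => exp (- gamma * w + phi M Q Qt zeta T i t))).
      apply continuity_2d_pt_const. apply c2d_expw, phi_cont; auto.
    + apply c2d_strip. intros t w.
      apply (continuity_2d_pt_mult (fun _ _ => - gamma ^ 2) (fun t w => exp (- gamma * w + phi M Q Qt zeta T i t))).
      apply continuity_2d_pt_const. apply c2d_expw, phi_cont; auto.
    + intros w. unfold u. rewrite phi_T by auto. rewrite Rplus_0_r. auto.
    + intros t w _. unfold u. split. ring. pose proof (exp_pos (- gamma * w + phi M Q Qt zeta T i t)).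
      assert (0 < gamma ^ 2) by (apply pow_lt; auto). nra.
    + intros t w _.
      replace (- (- exp (- gamma * w + phi M Q Qt zeta T i t) * dphi M Q Qt zeta T i t))
        with (exp (- gamma * w + phi M Q Qt zeta T i t) * dphi M Q Qt zeta T i t) by ring.
      split; [|split].
      * split.
        -- intros y [pi0 [p Hy]]. rewrite Hy. apply hjb_le; auto.
        -- intros b Hb. apply Hb. exists (pi0_star zeta gamma i), (pij_star M Q Qt zeta T gamma i t).
           symmetry. apply hjb_star; auto.
      * apply hjb_star; auto.
      * intros pi0 p Heq. eapply hjb_uniq; eauto.
Qed.
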